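(* For every $\bm U\in\mathbb V_h$, $|\bm U|_{1,h}\le\frac{\pi}{2}\|\nabla_h\bm U\|_h$.
   Context: $\Omega=[x_L,x_R]\times[y_L,y_R]$, $l_1=x_R-x_L$, $l_2=y_R-y_L$, $N_1,N_2$ even, $h_r=l_r/N_r$, grid points $x_{j_1}=x_L+j_1h_1$, $y_{j_2}=y_L+j_2h_2$, $0\le j_r\le N_r-1$. $\mathbb V_h$: doubly periodic grid functions identified with vectors $\bm U=(U_{0,0},U_{1,0},\dots,U_{N_1-1,0},U_{0,1},\dots,U_{N_1-1,N_2-1})^T$. $\langle\bm U,\bm V\rangle_h=h_1h_2\sum_{j_1,j_2}U_{j_1,j_2}V_{j_1,j_2}$, $\|\bm U\|_h^2=\langle\bm U,\bm U\rangle_h$. $\delta_x^+U_{j_1,j_2}=(U_{j_1+1,j_2}-U_{j_1,j_2})/h_1$, $\delta_y^+U_{j_1,j_2}=(U_{j_1,j_2+1}-U_{j_1,j_2})/h_2$, $\|\nabla_h\bm U\|_h^2=\|\delta_x^+\bm U\|_h^2+\|\delta_y^+\bm U\|_h^2$. With $\mu_r=2\pi/l_r$, $g^{(1)}_k(x)=\frac1{N_1}\sum_{l=-N_1/2}^{N_1/2}\frac1{a_l}e^{\mathrm il\mu_1(x-x_k)}$, $a_l=1$ for $|l|<N_1/2$, $a_{\pm N_1/2}=2$ (similarly $g^{(2)}_k(y)$), $\bm D_1^x=((g^{(1)}_k)'(x_j))_{j,k=0}^{N_1-1}$, $\bm D_1^y=((g^{(2)}_k)'(y_j))_{j,k=0}^{N_2-1}$,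 and $|\bm U|_{1,h}^2=\langle-(\bm I_{N_2}\otimes(\bm D_1^x)^2+(\bm D_1^y)^2\otimes\bm I_{N_1})\bm U,\bm U\rangle_h$ ($\otimes$ Kronecker product). *)

(* Defs.v *)
From mathcomp Require Import all_boot all_order all_algebra.
From mathcomp Require Import mxtens.
From mathcomp Require Import all_classical all_reals all_analysis.
Set Implicit Arguments. Unset Strict Implicit. Unset Printing Implicit Defensive.
Import Order.TTheory GRing.Theory Num.Theory.
Local Open Scope ring_scope.

Section Defs.
Variable R : realType.

Definition inv_a (N : nat) (l : int) : R :=
  if `|l|%N == N./2 then 2^-1 else 1.

(* the trigonometric cardinal function g_k on the grid with N points,
   spacing h (grid points x_j = x0 + j h), mu = 2 pi / (N h).
   g_k(x) = 1/N sum_{l=-N/2}^{N/2} (1/a_l) e^{i l mu (x - x_k)};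
   the imaginary parts cancel pairwise (l <-> -l, a_l = a_{-l}), so it is
   the real function below. *)
Definition gcard (N : nat) (x0 h : R) (k : nat) (x : R) : R :=
  let mu := 2 * pi / (N%:R * h) in
  N%:R^-1 * \sum_(0 <= i < N.+1)
     let l : int := (i%:Z - (N./2)%:Z)%R in
     inv_a N l * cos (l%:~R * mu * (x - (x0 + k%:R * h))).

Definition Dspec (N : nat) (x0 h : R) : 'M[R]_N :=
  \matrix_(j < N, k < N) derive1 (gcard N x0 h k) (x0 + (j : nat)%:R * h).

(* grid functions: vectors of length N2*N1, U_{j1,j2} at index j2*N1 + j1 *)
Definition gval (N1 N2 : nat) (U : 'cV[R]_(N2 * N1)) (j1 : 'I_N1) (j2 : 'I_N2) : R :=
  U (mxtens_index (j2, j1)) 0.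

Definition ip_h (N1 N2 : nat) (h1 h2 : R) (U V : 'cV[R]_(N2 * N1)) : R :=
  h1 * h2 * \sum_(j1 < N1) \sum_(j2 < N2) gval U j1 j2 * gval V j1 j2.

Definition norm_h (N1 N2 : nat) (h1 h2 : R) (U : 'cV[R]_(N2 * N1)) : R :=
  Num.sqrt (ip_h h1 h2 U U).

Definition dxp (N1 N2 : nat) (h1 : R) (U : 'cV[R]_(N2 * N1)) : 'cV[R]_(N2 * N1) :=
  \col_k (let ij := mxtens_unindex k in
          (gval U (ordS ij.2) ij.1 - gval U ij.2 ij.1) / h1).
Definition dyp (N1 N2 : nat) (h2 : R) (U : 'cV[R]_(N2 * N1)) : 'cV[R]_(N2 * N1) :=
  \col_k (let ij := mxtens_unindex k in
          (gval U ij.2 (ordS ij.1) - gval U ij.2 ij.1) / h2).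

Definition grad_norm_h (N1 N2 : nat) (h1 h2 : R) (U : 'cV[R]_(N2 * N1)) : R :=
  Num.sqrt (ip_h h1 h2 (dxp h1 U) (dxp h1 U) + ip_h h1 h2 (dyp h2 U) (dyp h2 U)).

Definition semi1_h (N1 N2 : nat) (xL h1 yL h2 : R) (U : 'cV[R]_(N2 * N1)) : R :=
  let Dx := Dspec N1 xL h1 in
  let Dy := Dspec N2 yL h2 in
  let A : 'M[R]_(N2 * N1) := tensmx (1%:M : 'M[R]_N2) (Dx *m Dx)
                           + tensmx (Dy *m Dy) (1%:M : 'M[R]_N1) in
  Num.sqrt (ip_h h1 h2 (- (A *m U)) U).

End Defs.

(* Main.v *)
Require Import Defs.
Set Warnings "-notation-overridden -ambiguous-paths -notation-incompatible-prefix -deprecated".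
From mathcomp Require Import all_boot all_order all_algebra.
From mathcomp Require Import mxtens.
From mathcomp Require Import all_classical all_reals all_analysis.
From mathcomp Require Import ring lra zify.
Import Order.TTheory GRing.Theory Num.Theory numFieldNormedType.Exports.
Local Open Scope classical_set_scope.
Local Open Scope ring_scope.
Lemma per2 (R : realType) (n : nat) : n%:R * (2 * pi) = pi *+ 2 *+ n :> R.
Proof. rewrite -mulrnA -[RHS]mulr_natl natrM; ring. Qed.
Lemma sin_per (R : realType) (y : R) (n : nat) : sin (y + n%:R * (2 * pi)) = sin y.
Proof. by rewrite per2 (periodicn (@sinD2pi R)). Qed.
Lemma cos_per (R : realType) (y : R) (n : nat) : cos (y + n%:R * (2 * pi)) = cos y.
Proof. by rewrite per2 (periodicn (@cosD2pi R)). Qed.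
Lemma sin_half_pos (R : realType) (N n : nat) : (0 < n < N)%N ->
  0 < sin (n%:R * (2 * pi / N%:R) / 2) :> R.
Proof.
move=> /andP[n0 nN]; apply: sin_gt0_pi.
have N0 : (0 < N)%N by apply: leq_trans nN.
have hN : (0 : R) < N%:R by rewrite ltr0n.
have hn : (0 : R) < n%:R by rewrite ltr0n.
have hnN : (n%:R : R) < N%:R by rewrite ltr_nat.
have pi0 := pi_gt0 R.
have -> : n%:R * (2 * pi / N%:R) / 2 = pi * (n%:R / N%:R) :> R.
  by field; rewrite pnatr_eq0 -lt0n.
apply/andP; split; first by rewrite mulr_gt0 // divr_gt0.
by rewrite gtr_pMr // ltr_pdivrMr // mul1r.
Qed.

Lemma sum_cos_zero (R : realType) (N n : nat) : (0 < n < N)%N ->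
  \sum_(j < N) cos (n%:R * (2 * pi / N%:R) * j%:R) = 0 :> R.
Proof.
move=> hnN; have hs := @sin_half_pos R N n hnN.
have N0 : (0 < N)%N by case/andP: hnN => a b; apply: leq_trans b.
set a := n%:R * (2 * pi / N%:R) in hs *.
apply: (mulfI (x := 2 * sin (a / 2))); first by rewrite mulf_neq0 ?gt_eqF.
rewrite mulr0 mulr_sumr -(big_mkord xpredT (fun j => 2 * sin (a / 2) * cos (a * j%:R))).
rewrite (@telescope_sumr_eq _ 0 N (fun j : nat => sin (a * j%:R - a / 2))) //.
  rewrite mulr0 sub0r sinN.
  have -> : a * N%:R - a / 2 = - (a / 2) + n%:R * (2 * pi).
    by rewrite /a; field; rewrite pnatr_eq0 -lt0n.
  by rewrite sin_per sinN subrr.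
move=> k _; rewrite /=.
have -> : a * k.+1%:R - a / 2 = a * k%:R + a / 2 by rewrite -natr1; field.
rewrite sinD sinB; ring.
Qed.

Lemma sum_sin_zero (R : realType) (N n : nat) : (0 < n < N)%N ->
  \sum_(j < N) sin (n%:R * (2 * pi / N%:R) * j%:R) = 0 :> R.
Proof.
move=> hnN; have hs := @sin_half_pos R N n hnN.
have N0 : (0 < N)%N by case/andP: hnN => a b; apply: leq_trans b.
set a := n%:R * (2 * pi / N%:R) in hs *.
apply: (mulfI (x := - (2 * sin (a / 2)))); first by rewrite oppr_eq0 mulf_neq0 ?gt_eqF.
rewrite mulr0 mulr_sumr -(big_mkord xpredT (fun j => - (2 * sin (a / 2)) * sin (a * j%:R))).
rewrite (@telescope_sumr_eq _ 0 N (fun j : nat => cos (a * j%:R - a / 2))) //.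
  rewrite mulr0 sub0r cosN.
  have -> : a * N%:R - a / 2 = - (a / 2) + n%:R * (2 * pi).
    by rewrite /a; field; rewrite pnatr_eq0 -lt0n.
  by rewrite cos_per cosN subrr.
move=> k _; rewrite /=.
have -> : a * k.+1%:R - a / 2 = a * k%:R + a / 2 by rewrite -natr1; field.
rewrite cosD cosB; ring.
Qed.

Section Orth.
Variable R : realType.
Variable N : nat.
Let t : R := 2 * pi / N%:R.

Lemma sum_cosB0 (l m : nat) : l != m -> (l < N)%N -> (m < N)%N ->
  \sum_(j < N) cos ((l%:R - m%:R) * t * j%:R) = 0.
Proof.
move=> lm lN mN; case: (ltngtP l m) => [lt|lt|eq]; last by rewrite eq eqxx in lm.
- under eq_bigr do rewrite -opprB -natrB ?(ltnW lt) // !mulNr cosN.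
  by apply: sum_cos_zero; rewrite subn_gt0 lt /= (leq_ltn_trans (leq_subr _ _)).
- under eq_bigr do rewrite -natrB ?(ltnW lt) //.
  by apply: sum_cos_zero; rewrite subn_gt0 lt /= (leq_ltn_trans (leq_subr _ _)).
Qed.

Lemma sum_sinB0 (l m : nat) : (l < N)%N -> (m < N)%N ->
  \sum_(j < N) sin ((l%:R - m%:R) * t * j%:R) = 0.
Proof.
move=> lN mN; case: (ltngtP l m) => [lt|lt|eq].
- under eq_bigr do rewrite -opprB -natrB ?(ltnW lt) // !mulNr sinN.
  by rewrite sumrN sum_sin_zero ?oppr0 // subn_gt0 lt /= (leq_ltn_trans (leq_subr _ _)).
- under eq_bigr do rewrite -natrB ?(ltnW lt) //.
  by apply: sum_sin_zero; rewrite subn_gt0 lt /= (leq_ltn_trans (leq_subr _ _)).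
- by under eq_bigr do rewrite eq subrr !mul0r sin0; rewrite big1.
Qed.

Lemma sum_cosD0 (l m : nat) : (0 < l)%N -> (l + m < N)%N ->
  \sum_(j < N) cos ((l%:R + m%:R) * t * j%:R) = 0.
Proof.
move=> l0 lmN; under eq_bigr do rewrite -natrD.
by apply: sum_cos_zero; rewrite lmN addn_gt0 l0.
Qed.

Lemma sum_sinD0 (l m : nat) : (0 < l)%N -> (l + m < N)%N ->
  \sum_(j < N) sin ((l%:R + m%:R) * t * j%:R) = 0.
Proof.
move=> l0 lmN; under eq_bigr do rewrite -natrD.
by apply: sum_sin_zero; rewrite lmN addn_gt0 l0.
Qed.

Definition cf (l : nat) (j : nat) : R := cos (l%:R * t * j%:R).
Definition sf (l : nat) (j : nat) : R := sin (l%:R * t * j%:R).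

Lemma orth_cc l m : (0 < l)%N -> (0 < m)%N -> (l + m < N)%N ->
  \sum_(j < N) cf l j * cf m j = if l == m then N%:R / 2 else 0.
Proof.
move=> l0 m0 lmN.
have lN : (l < N)%N by apply: leq_ltn_trans lmN; rewrite leq_addr.
have mN : (m < N)%N by apply: leq_ltn_trans lmN; rewrite leq_addl.
have E : forall j : 'I_N, cf l j * cf m j =
   (cos ((l%:R - m%:R) * t * j%:R) + cos ((l%:R + m%:R) * t * j%:R)) / 2.
  by move=> j; rewrite /cf !mulrBl !mulrDl cosB cosD; field.
rewrite (eq_bigr _ (fun j _ => E j)) -mulr_suml big_split /= sum_cosD0 // addr0.
case: eqP => [->|/eqP lm]; last by rewrite sum_cosB0 // mul0r.
by rewrite (eq_bigr (fun _ => 1)) ?sumr_const ?card_ord // => j _; rewrite subrr !mul0r cos0.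
Qed.

Lemma orth_ss l m : (0 < l)%N -> (0 < m)%N -> (l + m < N)%N ->
  \sum_(j < N) sf l j * sf m j = if l == m then N%:R / 2 else 0.
Proof.
move=> l0 m0 lmN.
have lN : (l < N)%N by apply: leq_ltn_trans lmN; rewrite leq_addr.
have mN : (m < N)%N by apply: leq_ltn_trans lmN; rewrite leq_addl.
have E : forall j : 'I_N, sf l j * sf m j =
   (cos ((l%:R - m%:R) * t * j%:R) - cos ((l%:R + m%:R) * t * j%:R)) / 2.
  by move=> j; rewrite /sf !mulrBl !mulrDl cosB cosD; field.
rewrite (eq_bigr _ (fun j _ => E j)) -mulr_suml sumrB /= sum_cosD0 // subr0.
case: eqP => [->|/eqP lm]; last by rewrite sum_cosB0 // mul0r.
by rewrite (eq_bigr (fun _ => 1)) ?sumr_const ?card_ord // => j _; rewrite subrr !mul0r cos0.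
Qed.

Lemma orth_sc l m : (0 < l)%N -> (0 < m)%N -> (l + m < N)%N ->
  \sum_(j < N) sf l j * cf m j = 0.
Proof.
move=> l0 m0 lmN.
have lN : (l < N)%N by apply: leq_ltn_trans lmN; rewrite leq_addr.
have mN : (m < N)%N by apply: leq_ltn_trans lmN; rewrite leq_addl.
have E : forall j : 'I_N, sf l j * cf m j =
   (sin ((l%:R + m%:R) * t * j%:R) + sin ((l%:R - m%:R) * t * j%:R)) / 2.
  by move=> j; rewrite /sf /cf !mulrBl !mulrDl sinB sinD; field.
rewrite (eq_bigr _ (fun j _ => E j)) -mulr_suml big_split /= sum_sinD0 // add0r.
by rewrite sum_sinB0 // mul0r.
Qed.

End Orth.
Section Bil.
Variable R : realType.
Variable N K : nat.
Hypothesis hK : (K + K <= N)%N.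

Definition FF (a b : nat -> R) (j : nat) : R :=
  \sum_(1 <= l < K) (a l * cf R N l j + b l * sf R N l j).

Lemma orth_bil a b a' b' :
  \sum_(j < N) FF a b j * FF a' b' j =
  N%:R / 2 * \sum_(1 <= l < K) (a l * a' l + b l * b' l).
Proof.
have E : forall j : 'I_N, FF a b j * FF a' b' j =
   \sum_(1 <= l < K) \sum_(1 <= m < K)
      (a l * cf R N l j + b l * sf R N l j) * (a' m * cf R N m j + b' m * sf R N m j).
  by move=> j; rewrite /FF mulr_suml; apply: eq_bigr => l _; rewrite mulr_sumr.
rewrite (eq_bigr _ (fun j _ => E j)) exchange_big /= mulr_sumr.
apply: eq_big_nat => l /andP[l1 lK].
rewrite exchange_big /=.
rewrite (eq_big_nat _ _ (F2 := fun m => if m == l then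
     N%:R / 2 * (a l * a' l + b l * b' l) else 0)).
  by rewrite -big_mkcond big_nat1_eq l1 lK.
move=> m /andP[m1 mK].
have lmN : (l + m < N)%N by lia.
have mlN : (m + l < N)%N by rewrite addnC.
have E2 : forall j : 'I_N,
  (a l * cf R N l j + b l * sf R N l j) * (a' m * cf R N m j + b' m * sf R N m j) =
  a l * a' m * (cf R N l j * cf R N m j) + a l * b' m * (sf R N m j * cf R N l j)
  + b l * a' m * (sf R N l j * cf R N m j) + b l * b' m * (sf R N l j * sf R N m j).
  by move=> j; ring.
rewrite (eq_bigr _ (fun j _ => E2 j)) !big_split /= -!mulr_sumr.
rewrite orth_cc // orth_ss // !orth_sc // !mulr0 !addr0 eq_sym.
by case: eqP => [->|_]; [ring | rewrite !mulr0 addr0].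
Qed.
End Bil.
Lemma shift_per (R : realType) (N l : nat) (f : R -> R) (j : 'I_N) :
  (forall y, f (y + l%:R * (2 * pi)) = f y) ->
  f (l%:R * (2 * pi / N%:R) * ((ordS j : nat)%:R - 1)) = f (l%:R * (2 * pi / N%:R) * (j : nat)%:R).
Proof.
move=> fp; have N0 : (0 < N)%N by case: j => j /= jN; lia.
have jN := ltn_ord j.
rewrite /ordS /=; case: (ltngtP j.+1 N) => h.
- by rewrite modn_small // -(@natr1 R j) addrK.
- exfalso; lia.
- rewrite h modnn -fp; congr f.
  have hN : (N%:R : R) = (j:nat)%:R + 1 by rewrite (@natr1 R j) h.
  rewrite hN; field; rewrite (@natr1 R j) pnatr_eq0 //.
Qed.
Lemma jordan (R : realType) (x : R) : 0 <= x <= pi / 2 -> 2 * x <= pi * sin x.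
Proof.
move=> /andP[x0 xp].
pose f := fun y : R => pi * sin y - 2 * y.
have fd : forall y : R, is_derive y (1:R) f (pi * cos y - 2).
  move=> y; rewrite /f.
  have -> : (fun y : R => pi * sin y - 2 * y) = (pi \*: (@sin R)) - (2 \*: id).
    by apply/funext => z /=.
  apply: is_derive_eq.
  by rewrite /= -[LHS]/(pi * cos y - 2 * 1) mulr1.
have fdv : forall y : R, derivable f y 1 by move=> y; by case: (fd y).
have df1 : forall y, (f^`())%classic y = pi * cos y - 2 by move=> y; rewrite derive1E derive_val.
have fc : forall y : R, {for y, continuous (f : R -> R)}.
  by move=> y; apply/differentiable_continuous/derivable1_diffP/fdv.
have fcw : forall a b : R, {within `[a, b], continuous f}.
  by move=> a b; apply: continuous_subspaceT.
have pi0 := pi_gt0 R.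
have hpi : pi / 2 <= pi :> R by lra.
suff : 0 <= f x by rewrite /f subr_ge0.
case: (leP 2 (pi * cos x)) => hc.
  have -> : 0 = f 0 by rewrite /f sin0 !mulr0 subr0.
  apply: (ger0_derive1_ndecr (a := 0) (b := x)) => //.
  move=> y; rewrite in_itv /= => /andP[y0 yx]; rewrite df1 subr_ge0.
  apply: (le_trans hc); rewrite ler_pM2l //.
  rewrite leNgt ltr_cos ?in_itv /= ?x0 ?(ltW y0) -?leNgt ?(ltW yx) //.
  - rewrite /=; lra.
  - rewrite /=; lra.
have -> : 0 = f (pi / 2).
  by rewrite /f sin_pihalf mulr1 mulrC divfK ?subrr // pnatr_eq0.
apply: (ler0_derive1_nincr (a := x) (b := pi / 2)) => //.
move=> y; rewrite in_itv /= => /andP[xy yp]; rewrite df1 subr_le0.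
apply: (le_trans _ (ltW hc)); rewrite ler_pM2l //.
rewrite leNgt ltr_cos ?in_itv /= ?x0 ?(ltW xy) -?leNgt ?(ltW yx) //.
- rewrite /=; lra.
- rewrite /=; lra.
- rewrite /=; lra.
Qed.
Section Bessel.
Variable R : realType.
Variable M : nat.
Let N := (M + M)%N.
Hypothesis M0 : (0 < M)%N.

Definition cA (w : 'I_N -> R) l := \sum_(j < N) w j * cf R N l j.
Definition sB (w : 'I_N -> R) l := \sum_(j < N) w j * sf R N l j.

Lemma sum_FF (w : 'I_N -> R) a b :
  \sum_(j < N) w j * FF R N M a b j = \sum_(1 <= l < M) (a l * cA w l + b l * sB w l).
Proof.
rewrite /FF; under eq_bigr do rewrite mulr_sumr.
rewrite exchange_big /=; apply: eq_bigr => l _.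
rewrite /cA /sB !mulr_sumr -big_split /=; apply: eq_bigr => j _; ring.
Qed.

Lemma bessel (w : 'I_N -> R) :
  2 / N%:R * \sum_(1 <= l < M) (cA w l ^+ 2 + sB w l ^+ 2) <= \sum_(j < N) w j ^+ 2.
Proof.
have hK : (M + M <= N)%N by [].
have N0 : (N%:R : R) != 0 by rewrite pnatr_eq0 /N; lia.
pose a l := 2 / N%:R * cA w l; pose b l := 2 / N%:R * sB w l.
have h0 : 0 <= \sum_(j < N) (w j - FF R N M a b j) ^+ 2 by apply: sumr_ge0 => j _; exact: sqr_ge0.
have E : \sum_(j < N) (w j - FF R N M a b j) ^+ 2 =
   \sum_(j < N) w j ^+ 2 - 2 * \sum_(j < N) w j * FF R N M a b j
   + \sum_(j < N) FF R N M a b j * FF R N M a b j.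
  rewrite mulr_sumr -sumrB -big_split /=; apply: eq_bigr => j _; ring.
rewrite E sum_FF (@orth_bil R N M hK) in h0.
set S := \sum_(1 <= l < M) (cA w l ^+ 2 + sB w l ^+ 2).
have E1 : \sum_(1 <= l < M) (a l * cA w l + b l * sB w l) = 2 / N%:R * S.
  rewrite /S mulr_sumr; apply: eq_bigr => l _; rewrite /a /b; ring.
have E2 : \sum_(1 <= l < M) (a l * a l + b l * b l) = (2 / N%:R) ^+ 2 * S.
  rewrite /S mulr_sumr; apply: eq_bigr => l _; rewrite /a /b; ring.
rewrite E1 E2 in h0.
have E3 : N%:R / 2 * ((2 / N%:R) ^+ 2 * S) = 2 / N%:R * S by field.
rewrite E3 in h0; lra.
Qed.
End Bessel.
Arguments cA {R M}.
Arguments sB {R M}.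

Section Shift.
Variable R : realType.
Variable M : nat.
Let N := (M + M)%N.
Variable u : 'I_N -> R.
Let w := fun j => u (ordS j) - u j.
Let th l : R := l%:R * (2 * pi / N%:R).

Lemma cA_shift l : cA w l = cA u l * (cos (th l) - 1) + sB u l * sin (th l).
Proof.
rewrite /cA /w.
under eq_bigr do rewrite mulrBl.
rewrite sumrB.
have -> : \sum_(j < N) u (ordS j) * cf R N l j =
          \sum_(j < N) u (ordS j) * cos (th l * ((ordS j : nat)%:R - 1)).
  apply: eq_bigr => j _; rewrite /cf /th (@shift_per R N l cos) // => y.
  exact: cos_per.
rewrite -(@reindex_inj _ _ _ _ (@ordS N) xpredT (fun k => u k * cos (th l * ((k : nat)%:R - 1))) (@ordS_inj N)) /=.
rewrite /sB mulr_suml mulr_suml -sumrB -big_split /=; apply: eq_bigr => j _.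
rewrite mulrBr mulr1 cosB /cf /sf /th; ring.
Qed.

Lemma sB_shift l : sB w l = sB u l * (cos (th l) - 1) - cA u l * sin (th l).
Proof.
rewrite /sB /w.
under eq_bigr do rewrite mulrBl.
rewrite sumrB.
have -> : \sum_(j < N) u (ordS j) * sf R N l j =
          \sum_(j < N) u (ordS j) * sin (th l * ((ordS j : nat)%:R - 1)).
  apply: eq_bigr => j _; rewrite /sf /th (@shift_per R N l sin) // => y.
  exact: sin_per.
rewrite -(@reindex_inj _ _ _ _ (@ordS N) xpredT (fun k => u k * sin (th l * ((k : nat)%:R - 1))) (@ordS_inj N)) /=.
rewrite /cA mulr_suml mulr_suml -sumrB -sumrB; apply: eq_bigr => j _.
rewrite mulrBr mulr1 sinB /cf /sf /th; ring.
Qed.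

Lemma shift_norm l : cA w l ^+ 2 + sB w l ^+ 2 =
   (cA u l ^+ 2 + sB u l ^+ 2) * (4 * sin (th l / 2) ^+ 2).
Proof.
rewrite cA_shift sB_shift.
have c2 : cos (th l) = 1 - 2 * sin (th l / 2) ^+ 2.
  set x := th l / 2.
  have -> : th l = x *+ 2 by rewrite mulr2n /x -splitr.
  rewrite cos_mulr2n cos2sin2 mulr2n; ring.
have s2 := cos2Dsin2 (th l).
set c := cos (th l) in c2 s2 *; set s := sin (th l) in s2 *.
set z := sin (th l / 2) in c2 *.
have -> : 4 * z ^+ 2 = 2 - 2 * c by rewrite c2; ring.
nra.
Qed.
End Shift.
Lemma core1d (R : realType) (M : nat) (M0 : (0 < M)%N) (h mu : R)
  (hpos : 0 < h) (hmu : mu * h = 2 * pi / (M + M)%N%:R)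
  (u : 'I_(M + M) -> R) (p : 'I_(M + M) -> 'I_(M + M) -> R)
  (hp : forall m k : 'I_(M + M), p m k = - (2 / (M + M)%N%:R) * mu *
     \sum_(1 <= l < M) l%:R * sin (l%:R * (2 * pi / (M + M)%N%:R) * ((m : nat)%:R - (k : nat)%:R))) :
  \sum_(m < M + M) (\sum_(k < M + M) p m k * u k) ^+ 2 <=
  (pi / 2) ^+ 2 * \sum_(j < M + M) ((u (ordS j) - u j) / h) ^+ 2.
Proof.
set N := (M + M)%N in p hp hmu u *.
have N0 : (N%:R : R) != 0 by rewrite pnatr_eq0 /N; lia.
have hK : (M + M <= N)%N by [].
pose a l := 2 / N%:R * mu * l%:R * sB u l.
pose b l := - (2 / N%:R * mu * l%:R * cA u l).
have E1 : forall m : 'I_N, \sum_(k < N) p m k * u k = FF R N M a b m.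
  move=> m; under eq_bigr do rewrite hp.
  rewrite /FF /a /b /cA /sB.
  under eq_bigr do rewrite -mulrA mulr_sumr mulrC mulr_sumr.
  under eq_bigr do rewrite mulr_sumr.
  rewrite exchange_big /=; apply: eq_bigr => l _.
  rewrite !mulr_sumr -sumrN !mulr_suml -big_split /=; apply: eq_bigr => k _.
  rewrite mulrBr sinB /cf /sf; ring.
rewrite (eq_bigr _ (fun m _ => congr1 (fun x => x ^+ 2) (E1 m))).
under eq_bigr do rewrite expr2.
rewrite (@orth_bil R N M hK).
have B := @bessel R M M0 (fun j => u (ordS j) - u j).
have E2 : \sum_(j < N) ((u (ordS j) - u j) / h) ^+ 2 =
          h^-2 * \sum_(j < N) (u (ordS j) - u j) ^+ 2.
  rewrite mulr_sumr; apply: eq_bigr => j _; rewrite expr_div_n; ring.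
rewrite E2.
apply: (le_trans _ (ler_wpM2l (sqr_ge0 (pi / 2)) (ler_wpM2l _ B))); last first.
  by rewrite invr_ge0 exprn_ge0 // ltW.
under [X in _ <= _ * (_ * (_ * X))]eq_bigr do rewrite shift_norm.
rewrite !mulr_sumr; apply: ler_sum_nat => l /andP[l1 lM].
set X := cA u l ^+ 2 + sB u l ^+ 2.
have X0 : 0 <= X by rewrite addr_ge0 // sqr_ge0.
set th := l%:R * (2 * pi / N%:R).
have hj : 2 * (th / 2) <= pi * sin (th / 2).
  apply: jordan; have pi0 := pi_gt0 R.
  have hN : (0 : R) < N%:R by rewrite ltr0n /N; lia.
  have hl : (l%:R : R) <= M%:R by rewrite ler_nat ltnW.
  have hNM : (N%:R : R) = M%:R + M%:R by rewrite /N natrD.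
  apply/andP; split.
    by rewrite /th mulr_ge0 // mulr_ge0 // divr_ge0 // mulr_ge0 // ltW.
  have hM : (0 : R) < M%:R by rewrite ltr0n.
  have -> : th / 2 = pi / 2 * (l%:R / M%:R).
    by rewrite /th hNM; field; rewrite !gt_eqF ?addr_gt0.
  apply: ler_piMr; first by rewrite divr_ge0 // ltW.
  by rewrite ler_pdivrMr // mul1r.
have hth : th = mu * h * l%:R by rewrite hmu /th mulrC.
rewrite /a /b.
have -> : (2 / N%:R * mu * l%:R * sB u l * (2 / N%:R * mu * l%:R * sB u l) +
   - (2 / N%:R * mu * l%:R * cA u l) * - (2 / N%:R * mu * l%:R * cA u l)) =
   (2 / N%:R) ^+ 2 * (mu * l%:R) ^+ 2 * X by rewrite /X; ring.
have th0 : 0 <= th.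
  have pi0 := pi_gt0 R; have hN : (0 : R) < N%:R by rewrite ltr0n /N; lia.
  rewrite /th mulr_ge0 // divr_ge0 ?mulr_ge0 // ltW //.
have hsq : th ^+ 2 <= (pi * sin (th / 2)) ^+ 2.
  have : th <= pi * sin (th / 2) by move: hj; rewrite mulrC divfK // pnatr_eq0.
  move=> hh; rewrite ler_sqr ?nnegrE //; exact: le_trans hh.
have ml : mu * l%:R = th / h by rewrite hth; field; rewrite gt_eqF.
rewrite ml.
have hN : (0 : R) < N%:R by rewrite ltr0n /N; lia.
have hM2 : (0 : R) < M%:R + M%:R by rewrite addr_gt0 // ltr0n.
apply: (@le_trans _ _ ((2 / N%:R * h^-2) * (th ^+ 2 * X))).
  rewrite le_eqVlt; apply/orP; left; apply/eqP; field.
  by rewrite !gt_eqF.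
apply: (@le_trans _ _ ((2 / N%:R * h^-2) * ((pi * sin (th / 2)) ^+ 2 * X))).
  apply: ler_wpM2l; last by apply: ler_wpM2r.
  by rewrite mulr_ge0 ?divr_ge0 ?invr_ge0 ?exprn_ge0 // ltW.
rewrite le_eqVlt; apply/orP; left; apply/eqP; rewrite /N; field.
by rewrite !gt_eqF // -natrD ltr0n; lia.
Qed.
Lemma is_derive_lin (R : realType) (b c x : R) :
  is_derive x (1:R) (fun y : R => b * (y - c)) b.
Proof.
have -> : (fun y : R => b * (y - c)) = b \*: (id - cst c).
  by apply/funext => y /=.
apply: is_derive_eq.
by rewrite subr0 -[LHS]/(b * 1) mulr1.
Qed.

Lemma is_derive_acos (R : realType) (a b c x : R) :
  is_derive x (1:R) (fun y : R => a * cos (b * (y - c))) (a * (- sin (b * (x - c)) * b)).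
Proof.
have -> : (fun y : R => a * cos (b * (y - c))) = a \*: (cos \o (fun y : R => b * (y - c))).
  by apply/funext => y /=.
apply: is_deriveZ.
apply: is_derive1_comp.
exact: is_derive_lin.
Qed.
Lemma gcard_derive (R : realType) (N : nat) (x0 h : R) (k : nat) (x : R) :
  let mu := 2 * pi / (N%:R * h) in
  let L := fun i : nat => (i%:Z - (N./2)%:Z)%R in
  derive1 (gcard N x0 h k) x = N%:R^-1 * \sum_(i < N.+1)
     (inv_a R N (L i) * (- sin ((L i)%:~R * mu * (x - (x0 + k%:R * h))) * ((L i)%:~R * mu))).
Proof.
move=> mu L.
have -> : gcard N x0 h k = (N%:R^-1) \*: (\sum_(i < N.+1) (fun y : R =>
   inv_a R N (L i) * cos ((L i)%:~R * mu * (y - (x0 + k%:R * h))))).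
  apply/funext => y; rewrite /gcard big_mkord /=.
  by rewrite fct_sumE.
rewrite derive1E.
have D := is_deriveZ (N%:R^-1) (is_derive_sum (fun i => @is_derive_acos R (inv_a R N (L i)) ((L i)%:~R * mu) (x0 + k%:R * h) x)).
by rewrite (@derive_val _ _ _ _ _ _ _ (D N.+1)).
Qed.
Lemma sum_sym (R : realType) (f : int -> R) (M : nat) (fs : forall z, f (- z) = f z) :
  \sum_(0 <= i < (M + M).+1) f (i%:Z - M%:Z)%R = f 0 + 2 * \sum_(1 <= l < M.+1) f l%:Z.
Proof.
elim: M => [|M IH].
  by rewrite big_nat1 big_geq // subr0 mulr0 addr0.
have -> : ((M.+1 + M.+1).+1 = (M + M).+3)%N by rewrite addnS addSn.
rewrite big_nat_recl // big_nat_recr //=.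
rewrite (eq_big_nat _ _ (F2 := fun i => f (i%:Z - M%:Z)%R)); last first.
  by move=> i _; congr f; lia.
rewrite IH [in RHS]big_nat_recr //=.
have -> : (0%:Z - M.+1%:Z)%R = - (M.+1%:Z) by rewrite sub0r.
rewrite fs.
have -> : ((M + M).+2%:Z - M.+1%:Z)%R = M.+1%:Z by lia.
lra.
Qed.

Lemma sin_pin (R : realType) (n : nat) : sin (n%:R * pi) = 0 :> R.
Proof.
elim: n => [|n IH]; first by rewrite mul0r sin0.
by rewrite -natr1 mulrDl mul1r sinDpi IH oppr0.
Qed.

Lemma Dspec_formula (R : realType) (M : nat) (M0 : (0 < M)%N) (x0 h : R) (h0 : h != 0)
  (j k : 'I_(M + M)) :
  Dspec (M + M) x0 h j k = - (2 / (M + M)%N%:R) * (2 * pi / ((M + M)%N%:R * h)) *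
    \sum_(1 <= l < M) l%:R * sin (l%:R * (2 * pi / (M + M)%N%:R) * ((j : nat)%:R - (k : nat)%:R)).
Proof.
rewrite /Dspec mxE gcard_derive.
set N := (M + M)%N.
have hN2 : N./2 = M by rewrite /N addnn doubleK.
have N0 : (N%:R : R) != 0 by rewrite pnatr_eq0 /N; lia.
set mu := 2 * pi / (N%:R * h).
have hxd : x0 + (j : nat)%:R * h - (x0 + (k : nat)%:R * h) = ((j : nat)%:R - (k : nat)%:R) * h.
  by ring.
rewrite hxd.
set d := (j : nat)%:R - (k : nat)%:R.
pose F := fun z : int => inv_a R N z * (- sin (z%:~R * mu * (d * h)) * (z%:~R * mu)).
rewrite -(big_mkord xpredT (fun i : nat => F (i%:Z - (N./2)%:Z)%R)) hN2.
rewrite (@sum_sym R F M); last first.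
  by move=> z; rewrite /F /inv_a abszN mulrNz !mulNr sinN; congr (_ * _); ring.
rewrite {1}/F mulr0z !mul0r !mulr0 add0r.
rewrite big_nat_recr //=.
have -> : F M%:Z = 0.
  rewrite /F.
  have -> : (M%:Z)%:~R * mu * (d * h) = (j : nat)%:R * pi - (k : nat)%:R * pi.
    rewrite /mu /d /N natrD; field; rewrite -natrD pnatr_eq0; apply/andP; split => //; lia.
  by rewrite sinB !sin_pin !mul0r mulr0 subrr oppr0 mul0r mulr0.
rewrite addr0 mulr_sumr [RHS]mulr_sumr mulr_sumr; apply: eq_big_nat => l /andP[l1 lM].
rewrite /F /inv_a.
have -> : (`|l%:Z|%N == N./2) = false by rewrite hN2 absz_nat; apply/eqP; lia.
have -> : l%:Z%:~R * mu * (d * h) = l%:R * (2 * pi / N%:R) * d.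
  rewrite /mu; field; apply/andP; split => //.
by field.
Qed.

Lemma oneD (R : realType) (M : nat) (M0 : (0 < M)%N) (x0 h : R) (hpos : 0 < h)
  (v : 'I_(M + M) -> R) :
  - \sum_(j < M + M) v j * \sum_(k < M + M) (Dspec (M + M) x0 h *m Dspec (M + M) x0 h) j k * v k
  <= (pi / 2) ^+ 2 * \sum_(j < M + M) ((v (ordS j) - v j) / h) ^+ 2.
Proof.
set N := (M + M)%N.
set D := Dspec N x0 h.
have h0 : h != 0 by rewrite gt_eqF.
have anti : forall j k, D k j = - D j k.
  move=> j k; rewrite /D !Dspec_formula // -[RHS]mulrN -sumrN; congr (_ * _).
  apply: eq_bigr => l _; rewrite -mulrN -sinN; congr (_ * sin _); ring.
have E : - \sum_(j < N) v j * \sum_(k < N) (D *m D) j k * v k =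
         \sum_(m < N) (\sum_(k < N) D m k * v k) ^+ 2.
  have E1 : forall m : 'I_N, (\sum_(k < N) D m k * v k) ^+ 2 =
     \sum_(j < N) \sum_(k < N) (D m j * v j) * (D m k * v k).
    move=> m; rewrite expr2 mulr_suml; apply: eq_bigr => j _; by rewrite mulr_sumr.
  rewrite (eq_bigr _ (fun m _ => E1 m)) exchange_big /= -sumrN; apply: eq_bigr => j _.
  rewrite exchange_big /= mulr_sumr -sumrN; apply: eq_bigr => k _.
  rewrite mxE mulr_suml mulr_sumr -sumrN; apply: eq_bigr => m _.
  rewrite (anti m j); ring.
rewrite E.
apply: (@core1d R M M0 h (2 * pi / (N%:R * h))) => //.
  by rewrite /N; field; rewrite h0 -natrD pnatr_eq0 andbT; lia.
by move=> m k; rewrite /D Dspec_formula.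
Qed.
Lemma sum_tens (R : realType) m n (F : 'I_(m * n) -> R) :
  \sum_(k < m * n) F k = \sum_(a < m) \sum_(b < n) F (mxtens_index (a, b)).
Proof.
rewrite pair_big /=.
rewrite (reindex (@mxtens_index m n)) /=; last first.
  by exists (@mxtens_unindex m n) => k _; rewrite (mxtens_indexK, mxtens_unindexK).
by apply: eq_bigr => -[a b] _.
Qed.

Lemma tensE (R : realType) m n p q (A : 'M[R]_(m, n)) (B : 'M[R]_(p, q)) i1 i2 j1 j2 :
  tensmx A B (mxtens_index (i1, i2)) (mxtens_index (j1, j2)) = A i1 j1 * B i2 j2.
Proof. by rewrite mxE !mxtens_indexK. Qed.

Lemma sum_delta (R : realType) n (i : 'I_n) (G : 'I_n -> R) :
  \sum_(a < n) (1%:M : 'M[R]_n) i a * G a = G i.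
Proof.
rewrite (bigD1 i) //= big1 ?addr0; first by rewrite mxE eqxx mul1r.
by move=> a /negbTE ai; rewrite mxE eq_sym ai mul0r.
Qed.

Lemma sum_delta_r (R : realType) n (i : 'I_n) (G : 'I_n -> R) :
  \sum_(a < n) G a * (1%:M : 'M[R]_n) a i = G i.
Proof.
rewrite (bigD1 i) //= big1 ?addr0; first by rewrite mxE eqxx mulr1.
by move=> a /negbTE ai; rewrite mxE ai mulr0.
Qed.

Lemma AU_E (R : realType) (N1 N2 : nat) (P : 'M[R]_N1) (Q : 'M[R]_N2)
  (U : 'cV[R]_(N2 * N1)) j1 j2 :
  gval ((tensmx (1%:M : 'M[R]_N2) P + tensmx Q (1%:M : 'M[R]_N1)) *m U) j1 j2 =
  \sum_(k1 < N1) P j1 k1 * gval U k1 j2 + \sum_(k2 < N2) Q j2 k2 * gval U j1 k2.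
Proof.
rewrite /gval mxE sum_tens.
under eq_bigr do under eq_bigr do rewrite mxE !tensE mulrDl.
under eq_bigr do rewrite big_split /=.
rewrite big_split /=; congr (_ + _).
  rewrite exchange_big /=; apply: eq_bigr => k1 _.
  under eq_bigr do rewrite -mulrA.
  by rewrite sum_delta.
apply: eq_bigr => k2 _.
under eq_bigr do rewrite mulrC mulrA mulrC.
by rewrite sum_delta mulrC.
Qed.

Lemma gvalN (R : realType) N1 N2 (X : 'cV[R]_(N2 * N1)) j1 j2 :
  gval (- X) j1 j2 = - gval X j1 j2.
Proof. by rewrite /gval mxE. Qed.

Lemma dxpE (R : realType) N1 N2 (h1 : R) (U : 'cV[R]_(N2 * N1)) j1 j2 :
  gval (dxp h1 U) j1 j2 = (gval U (ordS j1) j2 - gval U j1 j2) / h1.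
Proof. by rewrite {1}/gval /dxp mxE mxtens_indexK. Qed.

Lemma dypE (R : realType) N1 N2 (h2 : R) (U : 'cV[R]_(N2 * N1)) j1 j2 :
  gval (dyp h2 U) j1 j2 = (gval U j1 (ordS j2) - gval U j1 j2) / h2.
Proof. by rewrite {1}/gval /dyp mxE mxtens_indexK. Qed.

Lemma key (R : realType) (M1 M2 : nat) (M10 : (0 < M1)%N) (M20 : (0 < M2)%N)
  (xL yL h1 h2 : R) (h1p : 0 < h1) (h2p : 0 < h2)
  (U : 'cV[R]_((M2 + M2) * (M1 + M1))) :
  ip_h h1 h2 (- ((tensmx (1%:M : 'M[R]_(M2 + M2)) (Dspec (M1 + M1) xL h1 *m Dspec (M1 + M1) xL h1)
      + tensmx (Dspec (M2 + M2) yL h2 *m Dspec (M2 + M2) yL h2) (1%:M : 'M[R]_(M1 + M1))) *m U)) U <=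
  (pi / 2) ^+ 2 * (ip_h h1 h2 (dxp h1 U) (dxp h1 U) + ip_h h1 h2 (dyp h2 U) (dyp h2 U)).
Proof.
set u := gval U.
rewrite /ip_h.
under eq_bigr do under eq_bigr do rewrite gvalN AU_E mulNr mulrDl opprD.
under eq_bigr do rewrite big_split /=.
rewrite big_split /=.
have HX : \sum_(i < M1 + M1) \sum_(i0 < M2 + M2)
     - ((\sum_(k1 < M1 + M1) (Dspec (M1 + M1) xL h1 *m Dspec (M1 + M1) xL h1) i k1 * gval U k1 i0) * gval U i i0)
   <= (pi / 2) ^+ 2 * \sum_(i < M1 + M1) \sum_(i0 < M2 + M2) gval (dxp h1 U) i i0 * gval (dxp h1 U) i i0.
  rewrite exchange_big [X in _ <= _ * X]exchange_big /= mulr_sumr.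
  apply: ler_sum => i0 _.
  rewrite sumrN.
  have O := @oneD R M1 M10 xL h1 h1p (fun i => gval U i i0).
  rewrite [X in _ <= _ * X](eq_bigr (fun i => (((fun i => gval U i i0) (ordS i) - (fun i => gval U i i0) i) / h1) ^+ 2)); last first.
    by move=> i _; rewrite dxpE expr2.
  apply: le_trans O; rewrite le_eqVlt; apply/orP; left; apply/eqP; congr (- _).
  by apply: eq_bigr => i _; rewrite mulrC.
have HY : \sum_(i < M1 + M1) \sum_(i0 < M2 + M2)
     - ((\sum_(k2 < M2 + M2) (Dspec (M2 + M2) yL h2 *m Dspec (M2 + M2) yL h2) i0 k2 * gval U i k2) * gval U i i0)
   <= (pi / 2) ^+ 2 * \sum_(i < M1 + M1) \sum_(i0 < M2 + M2) gval (dyp h2 U) i i0 * gval (dyp h2 U) i i0.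
  rewrite mulr_sumr.
  apply: ler_sum => i _.
  rewrite sumrN.
  have O := @oneD R M2 M20 yL h2 h2p (fun i0 => gval U i i0).
  rewrite [X in _ <= _ * X](eq_bigr (fun i0 => (((fun i0 => gval U i i0) (ordS i0) - (fun i0 => gval U i i0) i0) / h2) ^+ 2)); last first.
    by move=> i0 _; rewrite dypE expr2.
  apply: le_trans O; rewrite le_eqVlt; apply/orP; left; apply/eqP; congr (- _).
  by apply: eq_bigr => i0 _; rewrite mulrC.
apply: (le_trans (ler_wpM2l _ (lerD HX HY))); first by rewrite mulr_ge0 // ltW.
by rewrite le_eqVlt; apply/orP; left; apply/eqP; ring.
Qed.

Local Close Scope classical_set_scope.
Theorem lemma2p4 (R : realType) (xL xR yL yR : R) (N1 N2 : nat)
  (hx : xL < xR) (hy : yL < yR)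
  (hN1 : (0 < N1)%N) (hN2 : (0 < N2)%N) (e1 : ~~ odd N1) (e2 : ~~ odd N2)
  (U : 'cV[R]_(N2 * N1)) :
  let h1 := (xR - xL) / N1%:R in
  let h2 := (yR - yL) / N2%:R in
  semi1_h xL h1 yL h2 U <= pi / 2 * grad_norm_h h1 h2 U.
Proof.
cbv zeta.
have h1p : 0 < (xR - xL) / N1%:R by rewrite divr_gt0 ?subr_gt0 // ltr0n.
have h2p : 0 < (yR - yL) / N2%:R by rewrite divr_gt0 ?subr_gt0 // ltr0n.
move: ((xR - xL) / N1%:R) h1p => h1 h1p.
move: ((yR - yL) / N2%:R) h2p => h2 h2p.
have [M1 eN1] : exists M1, N1 = (M1 + M1)%N.
  by exists N1./2; rewrite addnn -[LHS]odd_double_half (negbTE e1).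
have [M2 eN2] : exists M2, N2 = (M2 + M2)%N.
  by exists N2./2; rewrite addnn -[LHS]odd_double_half (negbTE e2).
subst N1 N2.
have M10 : (0 < M1)%N by lia.
have M20 : (0 < M2)%N by lia.
have K := @key R M1 M2 M10 M20 xL yL h1 h2 h1p h2p U.
rewrite /semi1_h /grad_norm_h /=.
have pi2 : 0 <= pi / 2 :> R by rewrite divr_ge0 // ltW // pi_gt0.
rewrite -[pi / 2 in X in _ <= X](ger0_norm pi2) -sqrtr_sqr -sqrtrM ?sqr_ge0 //.
exact: ler_wsqrtr.
Qed.
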